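(* Let $\mathcal{Y}$ and $\mathcal{O}$ be finite sets, $\varphi\colon\mathcal{Y}\to\mathbb{R}^p$, $\psi\colon\mathcal{O}\to\mathbb{R}^p$, and let $L\colon\mathcal{O}\times\mathcal{Y}\to\mathbb{R}_+$ satisfy $L(\hat y,y)=\langle\psi(\hat y),V\varphi(y)+b\rangle+c(y)$ with $V\in\mathbb{R}^{p\times p}$, $b\in\mathbb{R}^p$, $c\colon\mathcal{Y}\to\mathbb{R}$. Let $\Omega\colon\mathbb{R}^p\to\mathbb{R}\cup\{\infty\}$ be proper, convex and lower semicontinuous with $\varphi(\mathcal{Y})\subseteq\operatorname{dom}(\Omega)$, and let the surrogate be $S(\theta,y)=S_\Omega(\theta,\varphi(y))$. Then for any decoder $d\colon\mathbb{R}^p\to\mathcal{O}$ and any $\epsilon\ge0$, the calibration function $$\zeta(\epsilon)=\inf_{\theta\in\mathbb{R}^p,\ q\in\triangle^{|\mathcal{Y}|}}\delta s(\theta,q)\quad\text{s.t.}\quad\delta\ell(d(\theta),q)\ge\epsilon$$ equals $$\zeta(\epsilon)=\inf_{\theta\in\mathbb{R}^p,\ \mu\in\mathcal{M}}S_\Omega(\theta,\mu)\quad\text{s.t.}\quad\langle\psi(d(\theta))-\psi(\hat y_L(\mu)),V\mu+b\rangle\ge\epsilon.$$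
   Context: $\triangle^{n}=\{q\in\mathbb{R}^n_+:\|q\|_1=1\}$. $S_\Omega(\theta,\mu)=\Omega^*(\theta)+\Omega(\mu)-\langle\theta,\mu\rangle$ where $\Omega^*$ is the Fenchel conjugate. $\mathcal{M}=\operatorname{conv}(\varphi(\mathcal{Y}))$, and for $q\in\triangle^{|\mathcal{Y}|}$, $\mu_\varphi(q)=\mathbb{E}_{Y\sim q}[\varphi(Y)]$. Pointwise risks: $\ell(\hat y,q)=\mathbb{E}_{Y\sim q}L(\hat y,Y)$, $s(\theta,q)=\mathbb{E}_{Y\sim q}S(\theta,Y)$; excess pointwise risks $\delta\ell(\hat y,q)=\ell(\hat y,q)-\min_{y'\in\mathcal{O}}\ell(y',q)$ and $\delta s(\theta,q)=s(\theta,q)-\inf_{\theta'\in\mathbb{R}^p}s(\theta',q)$. Calibrated decoding: $\hat y_L(u)\in\operatorname{argmin}_{y'\in\mathcal{O}}\langle\psi(y'),Vu+b\rangle$ (any fixed tie-breaking). *)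

(* Defs.v *)
From Stdlib Require Import Reals ClassicalEpsilon.
From mathcomp Require Import ssreflect ssrfun ssrbool eqtype ssrnat seq choice fintype.
Set Implicit Arguments.
Unset Strict Implicit.
Unset Printing Implicit Defensive.
Open Scope R_scope.

Definition vec (p : nat) := 'I_p -> R.

Definition sumR {T : Type} (s : seq T) (f : T -> R) : R :=
  foldr (fun x acc => f x + acc) 0 s.

Definition dot {p : nat} (x y : vec p) : R := sumR (enum 'I_p) (fun i => x i * y i).
Definition vadd {p : nat} (x y : vec p) : vec p := fun i => x i + y i.
Definition vsub {p : nat} (x y : vec p) : vec p := fun i => x i - y i.
Definition matvec {p : nat} (V : 'I_p -> 'I_p -> R) (x : vec p) : vec p :=
  fun i => sumR (enum 'I_p) (fun j => V i j * x j).

Inductive ER := Fin (a : R) | PInf | MInf.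

Definition ER_le (x y : ER) : Prop :=
  match x, y with
  | MInf, _ => True
  | _, PInf => True
  | Fin a, Fin b => a <= b
  | _, _ => False
  end.
Definition ER_lt (x y : ER) : Prop := ER_le x y /\ x <> y.

(* addition; the convention PInf + MInf = PInf never matters below *)
Definition ER_plus (x y : ER) : ER :=
  match x, y with
  | Fin a, Fin b => Fin (a + b)
  | PInf, _ | _, PInf => PInf
  | _, _ => MInf
  end.
Definition ER_opp (x : ER) : ER :=
  match x with Fin a => Fin (- a) | PInf => MInf | MInf => PInf end.
Definition ER_minus (x y : ER) : ER := ER_plus x (ER_opp y).
(* scaling by a nonnegative real, with the convention 0 * (+-oo) = 0 *)
Definition ER_scale (r : R) (x : ER) : ER :=
  match x with
  | Fin a => Fin (r * a)
  | PInf => if Req_EM_T r 0 then Fin 0 else PInf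
  | MInf => if Req_EM_T r 0 then Fin 0 else MInf
  end.
Definition ER_sum {T : Type} (s : seq T) (f : T -> ER) : ER :=
  foldr (fun x acc => ER_plus (f x) acc) (Fin 0) s.

Definition is_glb (P : ER -> Prop) (z : ER) : Prop :=
  (forall w, P w -> ER_le z w) /\
  (forall z', (forall w, P w -> ER_le z' w) -> ER_le z' z).
Definition is_lub (P : ER -> Prop) (z : ER) : Prop :=
  (forall w, P w -> ER_le w z) /\
  (forall z', (forall w, P w -> ER_le w z') -> ER_le z z').
(* infimum / supremum in [-oo,+oo] (always exist; inf of empty set = +oo) *)
Definition ER_inf (P : ER -> Prop) : ER := epsilon (inhabits PInf) (is_glb P).
Definition ER_sup (P : ER -> Prop) : ER := epsilon (inhabits PInf) (is_lub P).

Definition dom {p : nat} (Om : vec p -> ER) (x : vec p) : Prop := Om x <> PInf.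

Definition proper_fun {p : nat} (Om : vec p -> ER) : Prop :=
  (forall x, Om x <> MInf) /\ (exists x, Om x <> PInf).

Definition convex_fun {p : nat} (Om : vec p -> ER) : Prop :=
  forall (x y : vec p) (t a b : R), 0 <= t <= 1 ->
    Om x = Fin a -> Om y = Fin b ->
    ER_le (Om (fun i => t * x i + (1 - t) * y i)) (Fin (t * a + (1 - t) * b)).

Definition lsc_fun {p : nat} (Om : vec p -> ER) : Prop :=
  forall (x : vec p) (r : R), ER_lt (Fin r) (Om x) ->
    exists del, 0 < del /\
      forall z : vec p, (forall i, Rabs (z i - x i) < del) -> ER_lt (Fin r) (Om z).

Definition fconj {p : nat} (Om : vec p -> ER) (th : vec p) : ER :=
  ER_sup (fun z => exists mu : vec p, z = ER_minus (Fin (dot th mu)) (Om mu)).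

Definition S_Omega {p : nat} (Om : vec p -> ER) (th mu : vec p) : ER :=
  ER_plus (ER_plus (fconj Om th) (Om mu)) (Fin (- dot th mu)).

Definition in_simplex {Y : finType} (q : Y -> R) : Prop :=
  (forall y, 0 <= q y) /\ sumR (enum Y) q = 1.

Definition mu_phi {Y : finType} {p : nat} (phi : Y -> vec p) (q : Y -> R) : vec p :=
  fun i => sumR (enum Y) (fun y => q y * phi y i).

Definition marginal_polytope {Y : finType} {p : nat} (phi : Y -> vec p) (mu : vec p) : Prop :=
  exists q : Y -> R, in_simplex q /\ mu = mu_phi phi q.

Definition ell {Y O : finType} (L : O -> Y -> R) (yh : O) (q : Y -> R) : R :=
  sumR (enum Y) (fun y => q y * L yh y).
Definition s_risk {Y : finType} {p : nat} (S : vec p -> Y -> ER) (th : vec p) (q : Y -> R) : ER :=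
  ER_sum (enum Y) (fun y => ER_scale (q y) (S th y)).

(* min over the finite set O, as an infimum *)
Definition delta_ell {Y O : finType} (L : O -> Y -> R) (yh : O) (q : Y -> R) : ER :=
  ER_minus (Fin (ell L yh q)) (ER_inf (fun z => exists y' : O, z = Fin (ell L y' q))).
Definition delta_s {Y : finType} {p : nat} (S : vec p -> Y -> ER) (th : vec p) (q : Y -> R) : ER :=
  ER_minus (s_risk S th q) (ER_inf (fun z => exists th' : vec p, z = s_risk S th' q)).

Definition calib_fn {Y O : finType} {p : nat} (S : vec p -> Y -> ER) (L : O -> Y -> R)
  (d : vec p -> O) (eps : R) : ER :=
  ER_inf (fun z => exists (th : vec p) (q : Y -> R),
            in_simplex q /\ ER_le (Fin eps) (delta_ell L (d th) q) /\ z = delta_s S th q).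

Definition calib_fn_reduced {Y O : finType} {p : nat} (phi : Y -> vec p) (psi : O -> vec p)
  (V : 'I_p -> 'I_p -> R) (b : vec p) (Om : vec p -> ER) (yhatL : vec p -> O)
  (d : vec p -> O) (eps : R) : ER :=
  ER_inf (fun z => exists th mu : vec p,
            marginal_polytope phi mu /\
            eps <= dot (vsub (psi (d th)) (psi (yhatL mu))) (vadd (matvec V mu) b) /\
            z = S_Omega Om th mu).

(* Main.v *)
Require Import Defs.
From Stdlib Require Import Reals Lra Psatz Lia ClassicalEpsilon FunctionalExtensionality PropExtensionality Classical.
From mathcomp Require Import ssreflect ssrfun ssrbool eqtype ssrnat seq choice fintype.
Open Scope R_scope.

Lemma sumR_ext {T} s (f g : T -> R) : (forall x, f x = g x) -> sumR s f = sumR s g.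
Proof. move=> H; elim: s => //= x s ->; by rewrite H. Qed.
Lemma sumR_add {T} s (f g : T -> R) : sumR s (fun x => f x + g x) = sumR s f + sumR s g.
Proof. elim: s => /= [|x s ->]; lra. Qed.
Lemma sumR_scal {T} s c (f : T -> R) : sumR s (fun x => c * f x) = c * sumR s f.
Proof. elim: s => /= [|x s ->]; ring. Qed.
Lemma sumR_sub {T} s (f g : T -> R) : sumR s (fun x => f x - g x) = sumR s f - sumR s g.
Proof. elim: s => /= [|x s ->]; ring. Qed.
Lemma sumR_zero {T} s : sumR s (fun _ : T => 0) = 0.
Proof. elim: s => /= [|x s ->]; ring. Qed.
Lemma sumR_le {T} s (f g : T -> R) : (forall x, f x <= g x) -> sumR s f <= sumR s g.
Proof. move=> H; elim: s => /= [|x s IH]; [lra| have := H x; lra]. Qed.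
Lemma sumR_ge0 {T} s (f : T -> R) : (forall x, 0 <= f x) -> 0 <= sumR s f.
Proof. move=> H; have := sumR_le s (fun _ => 0) f H; by rewrite sumR_zero. Qed.
Lemma sumR_swap {T U} (s : seq T) (t : seq U) (f : T -> U -> R) :
  sumR s (fun x => sumR t (fun y => f x y)) = sumR t (fun y => sumR s (fun x => f x y)).
Proof.
elim: s => /= [|x s ->]; first by rewrite sumR_zero.
by rewrite -sumR_add.
Qed.
Lemma sumR_term {T : eqType} s (f : T -> R) x : (forall y, 0 <= f y) -> x \in s -> f x <= sumR s f.
Proof.
move=> H; elim: s => //= y s IH; rewrite in_cons => /orP [/eqP ->|/IH]; 
 have := sumR_ge0 s f H; have := H y; lra.
Qed.
Lemma sumR_nonneg0 {T} s (q : T -> R) (g : T -> R) : (forall y, 0 <= q y) -> sumR s q = 0 ->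
  sumR s (fun y => q y * g y) = 0.
Proof.
move=> H; elim: s => //= y s IH Hs.
have := sumR_ge0 s q H; have := H y => h1 h2.
have e1 : q y = 0 by lra.
rewrite IH; [rewrite e1; ring| lra].
Qed.
Lemma Un_cv_ext u v l : (forall n, u n = v n) -> Un_cv u l -> Un_cv v l.
Proof. move=> H Hu e He; case: (Hu e He) => N HN; exists N => n Hn; rewrite -H; auto. Qed.
Lemma Un_cv_const c : Un_cv (fun _ => c) c.
Proof. move=> e He; exists 0%nat => n _; rewrite /R_dist Rminus_diag Rabs_R0; lra. Qed.
Lemma sumR_cv {T} s (u : nat -> T -> R) (l : T -> R) :
  (forall x, Un_cv (fun n => u n x) (l x)) -> Un_cv (fun n => sumR s (u n)) (sumR s l).
Proof.
move=> H; elim: s => /= [|x s IH]; first exact: Un_cv_const.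
exact: CV_plus.
Qed.
Lemma ev_all {T : eqType} (s : seq T) (P : T -> nat -> Prop) :
  (forall x, exists N, forall n, (n >= N)%coq_nat -> P x n) ->
  exists N, forall n, (n >= N)%coq_nat -> forall x, x \in s -> P x n.
Proof.
move=> H; elim: s => [|y s [N IH]]; first by exists 0%nat.
case: (H y) => N1 H1; exists (Nat.max N N1) => n Hn x; rewrite in_cons => /orP [/eqP ->|Hx].
- apply: H1; lia.
- apply: IH => //; lia.
Qed.

Lemma ER_le_trans x y z : ER_le x y -> ER_le y z -> ER_le x z.
Proof. case: x; case: y; case: z => //= *; lra. Qed.
Lemma ER_le_antisym x y : ER_le x y -> ER_le y x -> x = y.
Proof. case: x; case: y => //= a b h1 h2; f_equal; lra. Qed.
Lemma ER_le_refl x : ER_le x x.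
Proof. case: x => //= a; lra. Qed.
Lemma ER_not_le x y : ~ ER_le x y -> ER_le y x.
Proof. case: x; case: y => //= a b h; lra. Qed.

Lemma ER_inf_eq P m : is_glb P m -> ER_inf P = m.
Proof.
move=> H; have E : exists z, is_glb P z by exists m.
have := epsilon_spec (inhabits PInf) (is_glb P) E; rewrite -/(ER_inf P) => [[h1 h2]].
case: H => g1 g2; apply: ER_le_antisym; [apply: g2 | apply: h2]; auto.
Qed.

Lemma ER_lub_ex P : exists z, Defs.is_lub P z.
Proof.
case: (classic (P PInf)) => HP.
  exists PInf; split; first by case.
  by case => // [a|] H; have := H _ HP.
case: (classic (exists a, P (Fin a))) => [[a0 Ha0]|Hn]; last first.
  exists MInf; split => [w Hw|z' _]; last by case: z'.
  by case: w Hw => // a Ha; case: Hn; exists a.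
case: (classic (exists M, forall a, P (Fin a) -> a <= M)) => [HM|HM].
- have Hb : bound (fun a => P (Fin a)) by case: HM => M HM; exists M.
  case: (completeness _ Hb (ex_intro _ a0 Ha0)) => l [Hl1 Hl2].
  exists (Fin l); split.
  + case => //= a Ha; exact: Hl1.
  + case => //= [b|] H; last by have := H _ Ha0.
    apply: Hl2 => a Ha; exact: (H _ Ha).
- exists PInf; split; first by case.
  case => //= [b|] H; last by have := H _ Ha0.
  case: HM; exists b => a Ha; exact: (H _ Ha).
Qed.

Lemma ER_sup_spec P : Defs.is_lub P (ER_sup P).
Proof. exact: (epsilon_spec (inhabits PInf) (Defs.is_lub P) (ER_lub_ex P)). Qed.

Lemma ER_plus_PInf_l x : ER_plus PInf x = PInf. Proof. by case: x. Qed.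
Lemma ER_plus_PInf_r x : ER_plus x PInf = PInf. Proof. by case: x. Qed.

Lemma ER_sum_fin {T} s (f : T -> R) : ER_sum s (fun y => Fin (f y)) = Fin (sumR s f).
Proof. elim: s => //= x s ->; done. Qed.

Lemma ER_sum_PInf {T : eqType} (s : seq T) f : (exists2 y, y \in s & f y = PInf) -> ER_sum s f = PInf.
Proof.
elim: s => [[y]//|y s IH [x]]; rewrite in_cons => /orP [/eqP ->|Hx] Hf /=.
  by rewrite Hf ER_plus_PInf_l.
by rewrite IH ?ER_plus_PInf_r //; exists x.
Qed.

Lemma dot_comm {p} (x y : vec p) : dot x y = dot y x.
Proof. apply: sumR_ext => i; ring. Qed.
Lemma dot_ge0 {p} (x : vec p) : 0 <= dot x x.
Proof. apply: sumR_ge0 => i; nra. Qed.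
Lemma dot_coord {p} (x : vec p) i : x i * x i <= dot x x.
Proof. apply: (sumR_term _ (fun i => x i * x i)); [move=> j; nra| by rewrite mem_enum]. Qed.

Lemma sqr_ge0 a : 0 <= a * a. Proof. nra. Qed.

Lemma sumR_lin3 {T} s (f g h k : T -> R) a b c :
  (forall i, f i = a * g i + b * h i + c * k i) ->
  sumR s f = a * sumR s g + b * sumR s h + c * sumR s k.
Proof. move=> H; rewrite (sumR_ext _ _ _ H) !sumR_add !sumR_scal. done. Qed.

Lemma epi_conv p (Om : vec p -> ER) : proper_fun Om -> convex_fun Om ->
  forall x t y s l, 0 <= l <= 1 -> ER_le (Om x) (Fin t) -> ER_le (Om y) (Fin s) ->
  ER_le (Om (fun i => l * x i + (1 - l) * y i)) (Fin (l * t + (1 - l) * s)).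
Proof.
move=> [Hp _] Hc x t y s l Hl.
case Ex: (Om x) => [a||] //= Hx; last by case: (Hp x).
case Ey: (Om y) => [b||] //= Hy; last by case: (Hp y).
apply: ER_le_trans (Hc x y l a b Hl Ex Ey) _ => /=; nra.
Qed.

Lemma sq_lt_abs d e : 0 < e -> d * d < e * e -> Rabs d < e.
Proof. move=> He H; split_Rabs; nra. Qed.

Lemma inv_small e : 0 < e -> exists N, forall n, (n >= N)%coq_nat -> / INR n.+1 < e.
Proof.
move=> He; case: (archimed_cor1 e He) => N [H1 H2]; exists N => n Hn.
apply: Rle_lt_trans H1; apply: Rinv_le_contravar; first by apply: lt_0_INR; lia.
apply: le_INR; lia.
Qed.

Lemma le_addr a b c : a <= b -> 0 <= c -> a <= b + c.
Proof. move=> *; lra. Qed.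
Lemma le_addl a b c : a <= c -> 0 <= b -> a <= b + c.
Proof. move=> *; lra. Qed.

Lemma FM p (Om : vec p -> ER) : proper_fun Om -> convex_fun Om -> lsc_fun Om ->
  forall mu w0 r, Om mu = Fin w0 -> r < w0 ->
  exists th : vec p, forall x a, Om x = Fin a -> r + dot th x - dot th mu <= a.
Proof.
move=> Hpr Hcv Hlsc mu w0 r Hmu Hr.
have HnM := proj1 Hpr.
pose C x t := ER_le (Om x) (Fin t).
pose SQ (x : vec p) := sumR (enum 'I_p) (fun i => (x i - mu i) * (x i - mu i)).
pose Nd x t := SQ x + (t - r) * (t - r).
have SQ0 x : 0 <= SQ x by rewrite /SQ; apply: sumR_ge0 => i; exact: sqr_ge0.
have Nd0 x t : 0 <= Nd x t by rewrite /Nd; have := SQ0 x; have := sqr_ge0 (t - r); lra.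
have Cmu : C mu w0 by rewrite /C Hmu /=; lra.
pose E v := exists x t, C x t /\ v = - Nd x t.
have Eb : bound E by exists 0 => v [x [t [_ ->]]]; have := Nd0 x t; lra.
have Ene : exists v, E v by exists (- Nd mu w0), mu, w0.
case: (completeness E Eb Ene) => l [Hl1 Hl2].
pose dl := - l.
have G1 x t : C x t -> dl <= Nd x t.
  move=> Hc; have := Hl1 (- Nd x t) (ex_intro _ x (ex_intro _ t (conj Hc erefl))); rewrite /dl; lra.
have G2 e : 0 < e -> exists x t, C x t /\ Nd x t < dl + e.
  move=> He; apply: NNPP => Hn.
  have : l <= l - e; last lra.
  apply: Hl2 => v [x [t [Hc ->]]].
  apply: Rnot_lt_le => Hlt; apply: Hn; exists x, t; split => //; rewrite /dl; lra.
have Hseq n : exists c : vec p * R, C c.1 c.2 /\ Nd c.1 c.2 < dl + / INR n.+1.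
  have [x [t [H1 H2]]] := G2 (/ INR n.+1) (Rinv_0_lt_compat _ (lt_0_INR _ (Nat.lt_0_succ n))).
  by exists (x, t).
pose cs n := proj1_sig (constructive_indefinite_description _ (Hseq n)).
have Hcs n : C (cs n).1 (cs n).2 /\ Nd (cs n).1 (cs n).2 < dl + / INR n.+1 :=
  proj2_sig (constructive_indefinite_description _ (Hseq n)).
pose X n := (cs n).1. pose T n := (cs n).2.
have HC n : C (X n) (T n) := proj1 (Hcs n).
have HN n : Nd (X n) (T n) < dl + / INR n.+1 := proj2 (Hcs n).
pose D (x : vec p) t (y : vec p) s := sumR (enum 'I_p) (fun i => (x i - y i) * (x i - y i)) + (t - s) * (t - s).
have Dle x t y s : C x t -> C y s -> D x t y s <= 2 * Nd x t + 2 * Nd y s - 4 * dl.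
  move=> Hx Hy.
  have Hm := G1 _ _ (epi_conv _ _ Hpr Hcv _ _ _ _ (/2) (conj (ltac:(lra) : 0 <= /2) (ltac:(lra) : /2 <= 1)) Hx Hy).
  suff -> : D x t y s = 2 * Nd x t + 2 * Nd y s - 4 * Nd (fun i => / 2 * x i + (1 - / 2) * y i) (/ 2 * t + (1 - / 2) * s) by lra.
  rewrite /D /Nd /SQ; cbv beta; rewrite (sumR_lin3 _ _ (fun i => (x i - mu i) * (x i - mu i)) (fun i => (y i - mu i) * (y i - mu i))
     (fun i => (/ 2 * x i + (1 - / 2) * y i - mu i) * (/ 2 * x i + (1 - / 2) * y i - mu i)) 2 2 (-4)).
    set A := sumR _ (fun i => (x i - mu i) * (x i - mu i)).
    set B := sumR _ (fun i => (y i - mu i) * (y i - mu i)).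
    set K := sumR _ (fun i => (/ 2 * x i + (1 - / 2) * y i - mu i) * (/ 2 * x i + (1 - / 2) * y i - mu i)).
    field.
  move=> i; field.
have Dc x t y s i : (x i - y i) * (x i - y i) <= D x t y s.
  apply: le_addr; last exact: sqr_ge0.
  exact: (sumR_term (enum 'I_p) (fun i => (x i - y i) * (x i - y i)) i (fun j => sqr_ge0 _) (mem_enum _ _)).
have Dt x t y s : (t - s) * (t - s) <= D x t y s.
  apply: le_addl; first exact: Rle_refl.
  exact: (sumR_ge0 (enum 'I_p) (fun i => (x i - y i) * (x i - y i)) (fun j => sqr_ge0 _)).
have Cau n e : 0 < e -> (forall k, (k >= n)%coq_nat -> / INR k.+1 < e * e / 4) -> 
  forall k1 k2, (k1 >= n)%coq_nat -> (k2 >= n)%coq_nat -> D (X k1) (T k1) (X k2) (T k2) < e * e.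
  move=> He Hk k1 k2 H1 H2.
  have := Dle _ _ _ _ (HC k1) (HC k2); have := HN k1; have := HN k2; have := Hk _ H1; have := Hk _ H2; lra.
have CX i : Cauchy_crit (fun n => X n i).
  move=> e He; have [N HNe] := inv_small (e * e / 4) ltac:(nra).
  exists N => n m Hn Hm; rewrite /R_dist; apply: sq_lt_abs => //.
  exact: Rle_lt_trans _ _ _ (Dc (X n) (T n) (X m) (T m) i) (Cau N e He HNe n m Hn Hm).
have CT : Cauchy_crit T.
  move=> e He; have [N HNe] := inv_small (e * e / 4) ltac:(nra).
  exists N => n m Hn Hm; rewrite /R_dist; apply: sq_lt_abs => //.
  exact: Rle_lt_trans _ _ _ (Dt (X n) (T n) (X m) (T m)) (Cau N e He HNe n m Hn Hm).
pose xs i := proj1_sig (R_complete _ (CX i)).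
have Hxs i : Un_cv (fun n => X n i) (xs i) := proj2_sig (R_complete _ (CX i)).
pose ts := proj1_sig (R_complete _ CT).
have Hts : Un_cv T ts := proj2_sig (R_complete _ CT).
have Cs : C xs ts.
  apply: NNPP => Hn.
  have Hle : ER_le (Fin ts) (Om xs) := ER_not_le _ _ Hn.
  have [r' [Hr'1 Hr'2]] : exists r', ts < r' /\ ER_lt (Fin r') (Om xs).
    move: Hn Hle; rewrite /C; case: (Om xs) => [a||] /= Hn Hle.
    - exists ((ts + a) / 2); split; first lra. split; [simpl; lra | move=> [Ea]; lra].
    - exists (ts + 1); split; [lra | split => //].
    - by [].
  have [del [Hdel Hball]] := Hlsc xs r' Hr'2.
  have [N1 HN1] := ev_all (enum 'I_p) (fun i n => Rabs (X n i - xs i) < del) (fun i => Hxs i del Hdel).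
  have [N2 HN2] := Hts (r' - ts) ltac:(lra).
  have Hn1 := HN1 (Nat.max N1 N2) ltac:(lia).
  have Hn2 := HN2 (Nat.max N1 N2) ltac:(lia).
  have [H1 H2] := Hball (X (Nat.max N1 N2)) (fun i => Hn1 i (mem_enum _ i)).
  move: (HC (Nat.max N1 N2)) H1 H2 Hn2; rewrite /C /R_dist.
  case: (Om (X _)) => [a||] //= Ha H1 H2 Hn2.
  move: Hn2; split_Rabs; lra.
have NdX : Un_cv (fun n => Nd (X n) (T n)) (Nd xs ts).
  rewrite /Nd /SQ; apply: CV_plus.
  - apply: (sumR_cv (enum 'I_p) (fun n i => (X n i - mu i) * (X n i - mu i)) (fun i => (xs i - mu i) * (xs i - mu i))) => i.
    by apply: CV_mult; apply: CV_minus; first [exact: Hxs | exact: Un_cv_const].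
  - by apply: CV_mult; apply: CV_minus; first [exact: Hts | exact: Un_cv_const].
have NdD : Un_cv (fun n => Nd (X n) (T n)) dl.
  move=> e He; have [N HNe] := inv_small e He; exists N => n Hn.
  have := HN n; have := G1 _ _ (HC n); have := HNe n Hn; rewrite /R_dist; split_Rabs; lra.
have Ndcs : Nd xs ts = dl := UL_sequence _ _ _ NdX NdD.
have VI x t : C x t -> 0 <= sumR (enum 'I_p) (fun i => (xs i - mu i) * (x i - xs i)) + (ts - r) * (t - ts).
  move=> Hc.
  set G := _ + _.
  set H := sumR (enum 'I_p) (fun i => (x i - xs i) * (x i - xs i)) + (t - ts) * (t - ts).
  have H0 : 0 <= H by apply: le_addr; [apply: sumR_ge0 => i; exact: sqr_ge0| exact: sqr_ge0].
  have key lam : 0 < lam <= 1 -> 0 <= 2 * G + lam * H.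
    move=> Hl.
    have Hc' := G1 _ _ (epi_conv _ _ Hpr Hcv _ _ _ _ lam (conj (ltac:(lra) : 0 <= lam) (proj2 Hl)) Hc Cs).
    have Eq : Nd (fun i => lam * x i + (1 - lam) * xs i) (lam * t + (1 - lam) * ts) = Nd xs ts + 2 * lam * G + lam * lam * H.
      rewrite /Nd /SQ /G /H; cbv beta.
      rewrite (sumR_lin3 _ _ (fun i => (xs i - mu i) * (xs i - mu i)) (fun i => (xs i - mu i) * (x i - xs i)) (fun i => (x i - xs i) * (x i - xs i)) 1 (2 * lam) (lam * lam)); last by move=> i; ring.
      set A := sumR _ (fun i => (xs i - mu i) * (xs i - mu i)).
      set B := sumR _ (fun i => (xs i - mu i) * (x i - xs i)).
      set K := sumR _ (fun i => (x i - xs i) * (x i - xs i)).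
      ring.
    rewrite Eq Ndcs in Hc'.
    apply: Rnot_lt_le => Hneg; have := Rmult_lt_compat_l lam _ _ (proj1 Hl) Hneg; lra.
  apply: Rnot_lt_le => HG.
  have HHG : 0 < H - G by lra.
  pose lam := - G / (H - G).
  have El : lam * (H - G) = - G by rewrite /lam; field; lra.
  have Hl0 : 0 < lam by apply: Rdiv_lt_0_compat; lra.
  have Hlam1 : lam <= 1 by nra.
  have := key lam (conj Hl0 Hlam1).
  have : lam * G < 0 by nra.
  lra.
have dpos : 0 < dl.
  apply: Rnot_le_lt => Hd.
  have Hz : Nd xs ts = 0 by have := Nd0 xs ts; lra.
  have Ht : ts = r.
    have : (ts - r) * (ts - r) = 0 by have := SQ0 xs; have := sqr_ge0 (ts - r); rewrite /Nd in Hz; lra.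
    case/Rmult_integral => ?; lra.
  have Hx : xs = mu.
    apply: functional_extensionality => i.
    have hs : (xs i - mu i) * (xs i - mu i) <= SQ xs.
      exact: (sumR_term (enum 'I_p) (fun i => (xs i - mu i) * (xs i - mu i)) i (fun j => sqr_ge0 _) (mem_enum _ _)).
    have := SQ0 xs; have := sqr_ge0 (ts - r); have := sqr_ge0 (xs i - mu i); rewrite /Nd in Hz => h1 h2 h3.
    have : (xs i - mu i) * (xs i - mu i) = 0 by lra.
    case/Rmult_integral => ?; lra.
  move: Cs; rewrite /C Hx Hmu Ht /=; lra.
have Sep x t : C x t -> dl <= sumR (enum 'I_p) (fun i => (xs i - mu i) * (x i - mu i)) + (ts - r) * (t - r).
  move=> Hc; have := VI x t Hc.
  have -> : sumR (enum 'I_p) (fun i => (xs i - mu i) * (x i - mu i)) = sumR (enum 'I_p) (fun i => (xs i - mu i) * (x i - xs i)) + SQ xs.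
    rewrite /SQ -sumR_add; apply: sumR_ext => i; ring.
  rewrite -Ndcs /Nd. lra.
have Hal : 0 < ts - r.
  have := Sep mu w0 Cmu.
  rewrite (sumR_ext _ _ (fun _ => 0)); last by move=> i; ring.
  rewrite sumR_zero => h.
  apply: Rnot_le_lt => h'.
  have := Rmult_le_compat_r (w0 - r) (ts - r) 0 ltac:(lra) h'.
  lra.
exists (fun i => - (xs i - mu i) / (ts - r)) => x a Ha.
have Hc : C x a by rewrite /C Ha /=; lra.
have := Sep x a Hc.
have Ed : dot (fun i => - (xs i - mu i) / (ts - r)) x - dot (fun i => - (xs i - mu i) / (ts - r)) mu = - / (ts - r) * sumR (enum 'I_p) (fun i => (xs i - mu i) * (x i - mu i)).
  rewrite /dot -sumR_sub -sumR_scal; apply: sumR_ext => i; field; lra.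
move: Ed; set S := sumR _ (fun i => (xs i - mu i) * (x i - mu i)) => Ed HS.
have E2 : / (ts - r) * (S + (ts - r) * (a - r)) = / (ts - r) * S + (a - r) by field; lra.
have : 0 < / (ts - r) * (S + (ts - r) * (a - r)) by apply: Rmult_lt_0_compat; [apply: Rinv_0_lt_compat; lra| lra].
lra.
Qed.

Lemma sumR_cons {T} x s (f : T -> R) : sumR (x :: s) f = f x + sumR s f.
Proof. by []. Qed.

Lemma jensen p (Y : finType) (Om : vec p -> ER) (phi : Y -> vec p) (w : Y -> R) :
  proper_fun Om -> convex_fun Om -> (forall y, Om (phi y) = Fin (w y)) ->
  forall (s : seq Y) (q : Y -> R), (forall y, 0 <= q y) -> sumR s q = 1 ->
  ER_le (Om (fun i => sumR s (fun y => q y * phi y i))) (Fin (sumR s (fun y => q y * w y))).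
Proof.
move=> Hpr Hcv Hw; elim => [|y0 s IH] q Hq.
  rewrite /sumR /= => H; lra.
rewrite !sumR_cons => Hs.
have Hs0 := sumR_ge0 s q Hq.
have Hq0 := Hq y0.
case: (Req_dec (q y0) 1) => E1.
- have Hr : sumR s q = 0 by lra.
  have -> : (fun i => q y0 * phi y0 i + sumR s (fun y => q y * phi y i)) = phi y0.
    apply: functional_extensionality => i; rewrite (sumR_nonneg0 s q (fun y => phi y i) Hq Hr) E1; ring.
  rewrite (sumR_nonneg0 s q w Hq Hr) E1 Hw /=; lra.
- pose k := 1 - q y0.
  have Hk : 0 < k by rewrite /k; lra.
  pose q' y := q y / k.
  have Hq' y : 0 <= q' y.
    rewrite /q'; apply: Rmult_le_pos; [exact: Hq | apply: Rlt_le; exact: Rinv_0_lt_compat].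
  have Hs' : sumR s q' = 1.
    rewrite /q' (sumR_ext s _ (fun y => / k * q y)); last by move=> y; rewrite /Rdiv Rmult_comm.
    rewrite sumR_scal; have -> : sumR s q = 1 - q y0 by lra.
    rewrite /k; field; lra.
  have IH' := IH q' Hq' Hs'.
  move: IH'; case E: (Om (fun i => sumR s (fun y => q' y * phi y i))) => [a||] //= Ha; last by case: (proj1 Hpr _ E).
  have Hc := Hcv (phi y0) (fun i => sumR s (fun y => q' y * phi y i)) (q y0) (w y0) a (conj Hq0 (ltac:(lra) : q y0 <= 1)) (Hw y0) E.
  have -> : (fun i => q y0 * phi y0 i + sumR s (fun y => q y * phi y i)) = 
     (fun i => q y0 * phi y0 i + (1 - q y0) * (fun i => sumR s (fun y => q' y * phi y i)) i).
    apply: functional_extensionality => i; congr (_ + _).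
    rewrite -sumR_scal; apply: sumR_ext => y; rewrite /q' /k; field; lra.
  apply: ER_le_trans Hc _ => /=.
  have : (1 - q y0) * sumR s (fun y => q' y * w y) = sumR s (fun y => q y * w y).
    rewrite -sumR_scal; apply: sumR_ext => y; rewrite /q' /k; field; lra.
  have : (1 - q y0) * a <= (1 - q y0) * sumR s (fun y => q' y * w y).
    apply: Rmult_le_compat_l => //; lra.
  lra.
Qed.

Lemma ER_sum_ext {T} s (f g : T -> ER) : (forall x, f x = g x) -> ER_sum s f = ER_sum s g.
Proof. move=> H; elim: s => //= x s ->; by rewrite H. Qed.

Lemma dot_avg {p} (Y : finType) (q : Y -> R) (u : vec p) (g : Y -> vec p) :
  sumR (enum Y) (fun y => q y * dot u (g y)) = dot u (fun i => sumR (enum Y) (fun y => q y * g y i)).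
Proof.
rewrite /dot (sumR_ext _ _ (fun y => sumR (enum 'I_p) (fun i => u i * (q y * g y i)))); last first.
  move=> y; rewrite -sumR_scal; apply: sumR_ext => i; ring.
rewrite sumR_swap; apply: sumR_ext => i; by rewrite sumR_scal.
Qed.

Lemma fconj_ge {p} (Om : vec p -> ER) th x a : Om x = Fin a -> ER_le (Fin (dot th x - a)) (fconj Om th).
Proof. move=> Ha; apply: (proj1 (ER_sup_spec _)); exists x; by rewrite Ha. Qed.

Lemma fconj_le {p} (Om : vec p -> ER) th M : proper_fun Om ->
  (forall x a, Om x = Fin a -> dot th x - a <= M) -> ER_le (fconj Om th) (Fin M).
Proof.
move=> [Hp _] H; apply: (proj2 (ER_sup_spec _)) => w [x ->].
case E: (Om x) => [a||] /=; [exact: H | done | by case: (Hp x)].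
Qed.

Lemma fconj_notM {p} (Om : vec p -> ER) th : proper_fun Om -> fconj Om th <> MInf.
Proof.
move=> [Hp [x0 H0]]; move: H0; case E: (Om x0) => [a||] // _; last by case: (Hp x0).
by move=> Hf; have := fconj_ge Om th x0 a E; rewrite Hf.
Qed.

Lemma s_risk_fin {p} (Y : finType) (Om : vec p -> ER) (phi : Y -> vec p) (w : Y -> R) th q a :
  (forall y, Om (phi y) = Fin (w y)) -> sumR (enum Y) q = 1 -> fconj Om th = Fin a ->
  s_risk (fun th y => S_Omega Om th (phi y)) th q
  = Fin (a + sumR (enum Y) (fun y => q y * w y) - dot th (mu_phi phi q)).
Proof.
move=> Hw Hq Ha; rewrite /s_risk (ER_sum_ext _ _ (fun y => Fin (q y * (a + w y - dot th (phi y))))); last first.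
  move=> y; rewrite /S_Omega Ha Hw /=; congr Fin; ring.
rewrite ER_sum_fin; congr Fin.
rewrite (sumR_ext _ _ (fun y => (a * q y + q y * w y) - q y * dot th (phi y))); last by move=> y; ring.
rewrite sumR_sub sumR_add sumR_scal Hq dot_avg /mu_phi; ring.
Qed.

Lemma s_risk_inf {p} (Y : finType) (Om : vec p -> ER) (phi : Y -> vec p) th q :
  in_simplex q -> fconj Om th = PInf -> s_risk (fun th y => S_Omega Om th (phi y)) th q = PInf.
Proof.
move=> [Hq0 Hq1] Hf.
have [y Hy] : exists y, q y <> 0.
  apply: NNPP => H.
  have : sumR (enum Y) q = 0.
    rewrite (sumR_ext _ _ (fun _ => 0)) ?sumR_zero // => y; apply: NNPP => Hy; apply: H; by exists y.
  lra.
apply: ER_sum_PInf; exists y; first by rewrite mem_enum.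
rewrite /S_Omega Hf ER_plus_PInf_l ER_plus_PInf_l /=.
by case: Req_EM_T.
Qed.

Lemma auxA (S w0 a d : R) : d - w0 <= a -> S - w0 <= a + S - d.
Proof. move=> *; lra. Qed.

Lemma s_inf {p} (Y : finType) (Om : vec p -> ER) (phi : Y -> vec p) (w : Y -> R) q w0 :
  proper_fun Om -> convex_fun Om -> lsc_fun Om -> (forall y, Om (phi y) = Fin (w y)) ->
  in_simplex q -> Om (mu_phi phi q) = Fin w0 ->
  ER_inf (fun z => exists th', z = s_risk (fun th y => S_Omega Om th (phi y)) th' q)
  = Fin (sumR (enum Y) (fun y => q y * w y) - w0).
Proof.
move=> Hpr Hcv Hlsc Hw Hq Hmu; have [Hq0 Hq1] := Hq.
set S := sumR (enum Y) (fun y => q y * w y).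
apply: ER_inf_eq; split.
- move=> z [th' ->].
  case E: (fconj Om th') => [a||].
  + rewrite (s_risk_fin Y Om phi w th' q a Hw Hq1 E) -/S /=.
    have := fconj_ge Om th' _ _ Hmu; rewrite E /=; lra.
  + by rewrite (s_risk_inf Y Om phi th' q Hq E).
  + by case: (fconj_notM Om th' Hpr).
- move=> z' Hz'; apply: NNPP => Hn.
  have Hle := ER_not_le _ _ Hn.
  have [r [Hr1 Hr2]] : exists r, r < w0 /\ ~ ER_le z' (Fin (S - r)).
    move: Hz' Hn Hle; case: z' => [c||] Hz' Hn Hle.
    + exists (w0 - (c - (S - w0)) / 2); simpl in Hn, Hle |- *; split; lra.
    + exists (w0 - 1); split; [lra | by []].
    + by [].
  have [th' Hth'] := FM p Om Hpr Hcv Hlsc _ _ _ Hmu Hr1.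
  have Hf := fconj_le Om th' (dot th' (mu_phi phi q) - r) Hpr
     (fun x a Ha => ltac:(have := Hth' x a Ha; lra)).
  move: Hf; case E: (fconj Om th') => [a||] //= Ha; last by case: (fconj_notM Om th' Hpr).
  have := Hz' _ (ex_intro _ th' erefl); rewrite (s_risk_fin Y Om phi w th' q a Hw Hq1 E) -/S => Hz2.
  apply: Hr2; apply: ER_le_trans Hz2 _ => /=; lra.
Qed.

Definition ERv (x : ER) : R := match x with Fin a => a | _ => 0 end.

Lemma Om_mu_fin {p} (Y : finType) Om (phi : Y -> vec p) w q :
  proper_fun Om -> convex_fun Om -> (forall y, Om (phi y) = Fin (w y)) -> in_simplex q ->
  exists w0, Om (mu_phi phi q) = Fin w0.
Proof.
move=> Hpr Hcv Hw [Hq0 Hq1].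
have := jensen p Y Om phi w Hpr Hcv Hw (enum Y) q Hq0 Hq1.
change (fun i => sumR (enum Y) (fun y => q y * phi y i)) with (mu_phi phi q).
case E: (Om (mu_phi phi q)) => [a||] //=; [by exists a | by case: (proj1 Hpr _ E)].
Qed.

Lemma delta_s_eq {p} (Y : finType) Om (phi : Y -> vec p) w th q :
  proper_fun Om -> convex_fun Om -> lsc_fun Om -> (forall y, Om (phi y) = Fin (w y)) -> in_simplex q ->
  delta_s (fun th y => S_Omega Om th (phi y)) th q = S_Omega Om th (mu_phi phi q).
Proof.
move=> Hpr Hcv Hlsc Hw Hq.
have [w0 Hmu] := Om_mu_fin Y Om phi w q Hpr Hcv Hw Hq.
rewrite /delta_s (s_inf Y Om phi w q w0 Hpr Hcv Hlsc Hw Hq Hmu).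
case E: (fconj Om th) => [a||].
- rewrite (s_risk_fin Y Om phi w th q a Hw (proj2 Hq) E) /S_Omega E Hmu /=; congr Fin.
  set S := sumR _ _. ring.
- by rewrite (s_risk_inf Y Om phi th q Hq E) /S_Omega E.
- by case: (fconj_notM Om th Hpr).
Qed.

Lemma ell_eq (Y O : finType) p (phi : Y -> vec p) (psi : O -> vec p) (L : O -> Y -> R) V b c q y' :
  (forall yh y, L yh y = dot (psi yh) (vadd (matvec V (phi y)) b) + c y) -> sumR (enum Y) q = 1 ->
  ell L y' q = dot (psi y') (vadd (matvec V (mu_phi phi q)) b) + sumR (enum Y) (fun y => q y * c y).
Proof.
move=> HL Hq; rewrite /ell (sumR_ext _ _ (fun y => q y * dot (psi y') (vadd (matvec V (phi y)) b) + q y * c y)); last by move=> y; rewrite HL; ring.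
rewrite sumR_add dot_avg; congr (_ + _).
congr dot; apply: functional_extensionality => i.
rewrite /vadd (sumR_ext _ _ (fun y => q y * matvec V (phi y) i + b i * q y)); last by move=> y; ring.
rewrite sumR_add sumR_scal Hq.
have H1 : sumR (enum Y) (fun y => q y * matvec V (phi y) i) = matvec V (mu_phi phi q) i := dot_avg Y q (V i) phi.
rewrite H1; ring.
Qed.

Lemma delta_ell_eq (Y O : finType) p (phi : Y -> vec p) (psi : O -> vec p) (L : O -> Y -> R) V b c
  (yhatL : vec p -> O) yh q :
  (forall yh y, L yh y = dot (psi yh) (vadd (matvec V (phi y)) b) + c y) ->
  (forall (u : vec p) (y' : O),
      dot (psi (yhatL u)) (vadd (matvec V u) b) <= dot (psi y') (vadd (matvec V u) b)) ->
  in_simplex q ->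
  delta_ell L yh q = Fin (dot (vsub (psi yh) (psi (yhatL (mu_phi phi q)))) (vadd (matvec V (mu_phi phi q)) b)).
Proof.
move=> HL Hy [Hq0 Hq1].
rewrite /delta_ell (ER_inf_eq _ (Fin (ell L (yhatL (mu_phi phi q)) q))); last first.
  split.
  - move=> z [y' ->] /=; rewrite !(ell_eq Y O p phi psi L V b c q _ HL Hq1).
    have := Hy (mu_phi phi q) y'; lra.
  - move=> z' H; apply: H; by exists (yhatL (mu_phi phi q)).
rewrite /ER_minus /= !(ell_eq Y O p phi psi L V b c q _ HL Hq1); congr Fin.
have -> : forall x y u : vec p, dot (vsub x y) u = dot x u - dot y u.
  move=> x y u; rewrite /dot -sumR_sub; apply: sumR_ext => i; rewrite /vsub; ring.
set C := sumR _ _. ring.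
Qed.

Theorem mainTheorem6 (Y O : finType) (p : nat)
  (phi : Y -> vec p) (psi : O -> vec p) (L : O -> Y -> R)
  (V : 'I_p -> 'I_p -> R) (b : vec p) (c : Y -> R)
  (HLnn : forall (yh : O) (y : Y), 0 <= L yh y)
  (HL : forall (yh : O) (y : Y),
      L yh y = dot (psi yh) (vadd (matvec V (phi y)) b) + c y)
  (Om : vec p -> ER)
  (Hproper : proper_fun Om) (Hconv : convex_fun Om) (Hlsc : lsc_fun Om)
  (Hdom : forall y : Y, dom Om (phi y))
  (yhatL : vec p -> O)
  (HyhatL : forall (u : vec p) (y' : O),
      dot (psi (yhatL u)) (vadd (matvec V u) b) <= dot (psi y') (vadd (matvec V u) b))
  (d : vec p -> O) (eps : R) (Heps : 0 <= eps) :
  calib_fn (fun th y => S_Omega Om th (phi y)) L d eps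
  = calib_fn_reduced phi psi V b Om yhatL d eps.
Proof.
pose w y := ERv (Om (phi y)).
have Hw y : Om (phi y) = Fin (w y).
  rewrite /w; case E: (Om (phi y)) => [a||] //; [by case: (Hdom y) | by case: (proj1 Hproper _ E)].
rewrite /calib_fn /calib_fn_reduced; congr ER_inf.
apply: functional_extensionality => z; apply: propositional_extensionality; split.
- move=> [th [q [Hq [He ->]]]]; exists th, (mu_phi phi q); split; first by exists q.
  rewrite (delta_ell_eq Y O p phi psi L V b c yhatL _ q HL HyhatL Hq) /= in He; split => //.
  exact: (delta_s_eq Y Om phi w th q Hproper Hconv Hlsc Hw Hq).
- move=> [th [mu [[q [Hq ->]] [He ->]]]]; exists th, q; split => //; split.
  + by rewrite (delta_ell_eq Y O p phi psi L V b c yhatL _ q HL HyhatL Hq) /=.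
  + by rewrite (delta_s_eq Y Om phi w th q Hproper Hconv Hlsc Hw Hq).
Qed.
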